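(* Let $(E,\rho)$ be a complete partial $v$-generalized metric space and let $S:E\to E$ satisfy $\rho(Su,Sw)\le\lambda\max\{\rho(u,w),\rho(u,Su),\rho(w,Sw)\}$ for all $u,w\in E$, where $\lambda\in[0,1)$. Then $S$ has a unique fixed point $b\in E$, and $\rho(b,b)=0$.
   Context: Let $E$ be a nonempty set and $v\in\mathbb{N}$. $(E,\rho)$, with $\rho:E\times E\to[0,\infty)$, is a partial $v$-generalized metric space if for all $u,w,z_1,\dots,z_v\in E$: (1) $u=w$ iff $\rho(u,u)=\rho(u,w)=\rho(w,w)$; (2) $\rho(u,u)\le\rho(u,w)$; (3) $\rho(u,w)=\rho(w,u)$; (4) $\rho(u,w)\le\rho(u,z_1)+\rho(z_1,z_2)+\dots+\rho(z_{v-1},z_v)+\rho(z_v,w)-\sum_{i=1}^v\rho(z_i,z_i)$. A sequence $\{u_n\}$ in $E$ converges to $u\in E$ if $\lim_{n\to\infty}\rho(u_n,u)=\rho(u,u)$; it is Cauchy if $\lim_{n,m\to\infty}\rho(u_n,u_m)$ exists and is finite. $(E,\rho)$ is complete if for every Cauchy sequence $\{u_n\}$ there is $u\in E$ with $\lim_{n,m\to\infty}\rho(u_n,u_m)=\lim_{n\to\infty}\rho(u_n,u)=\rho(u,u)$. *)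

(* Defs.v *)
From Stdlib Require Import Reals.
Open Scope R_scope.

(* Chain sum for points z 1, ..., z v (v >= 1):
   rho(u,z1) + rho(z1,z2) + ... + rho(z_{v-1},z_v) + rho(z_v,w) - sum_{i=1}^v rho(z_i,z_i).
   sum_f s n f = f s + ... + f n. *)
Definition chain_sum' {E : Type} (rho : E -> E -> R) (v : nat) (z : nat -> E) (u w : E) : R :=
  rho u (z 1%nat)
  + (match v with
     | O | S O => 0
     | _ => sum_f 1 (v - 1) (fun i => rho (z i) (z (S i)))
     end)
  + rho (z v) w
  - sum_f 1 v (fun i => rho (z i) (z i)).

Definition partial_v_gen_metric {E : Type} (v : nat) (rho : E -> E -> R) : Prop :=
  (forall u w, 0 <= rho u w) /\
  (forall u w, u = w <-> (rho u u = rho u w /\ rho u w = rho w w)) /\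
  (forall u w, rho u u <= rho u w) /\
  (forall u w, rho u w = rho w u) /\
  (forall (u w : E) (z : nat -> E), rho u w <= chain_sum' rho v z u w).

Definition seq_lim (a : nat -> R) (L : R) : Prop :=
  forall eps, eps > 0 -> exists N, forall n, (N <= n)%nat -> Rabs (a n - L) < eps.

Definition dseq_lim (a : nat -> nat -> R) (L : R) : Prop :=
  forall eps, eps > 0 -> exists N, forall n m, (N <= n)%nat -> (N <= m)%nat ->
    Rabs (a n m - L) < eps.

Definition pv_converges {E : Type} (rho : E -> E -> R) (x : nat -> E) (u : E) : Prop :=
  seq_lim (fun n => rho (x n) u) (rho u u).

Definition pv_cauchy {E : Type} (rho : E -> E -> R) (x : nat -> E) : Prop :=
  exists L, dseq_lim (fun n m => rho (x n) (x m)) L.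

Definition pv_complete {E : Type} (rho : E -> E -> R) : Prop :=
  forall x : nat -> E, pv_cauchy rho x ->
    exists u : E,
      dseq_lim (fun n m => rho (x n) (x m)) (rho u u) /\
      seq_lim (fun n => rho (x n) u) (rho u u).

(* Main.v *)
Require Import Defs.
From Stdlib Require Import Reals Lra Lia.
Open Scope R_scope.

Lemma sum_f_cte (n : nat) (c : R) : (1 <= n)%nat -> sum_f 1 n (fun _ => c) = INR n * c.
Proof.
  intros H. unfold sum_f. rewrite sum_cte. replace (S (n - 1)) with n by lia. ring.
Qed.

Lemma tri {E : Type} (v : nat) (rho : E -> E -> R) :
  (1 <= v)%nat -> partial_v_gen_metric v rho ->
  forall u a w, rho u w <= rho u a + rho a w - rho a a.
Proof.
  intros Hv (H0 & H1 & H2 & H3 & H4) u a w.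
  specialize (H4 u w (fun _ => a)). unfold chain_sum' in H4.
  destruct v as [|[|v']]; [lia| |].
  - unfold sum_f in H4. simpl in H4. lra.
  - rewrite !sum_f_cte in H4 by lia.
    replace (S (S v') - 1)%nat with (S v') in H4 by lia.
    rewrite (S_INR (S v')) in H4. lra.
Qed.

Lemma zero_of (a l : R) : 0 <= a -> a <= l * a -> l < 1 -> a = 0.
Proof.
  intros H1 H2 H3. destruct (Rle_lt_or_eq_dec 0 a H1) as [Hlt|]; [|auto].
  exfalso. assert (0 < (1 - l) * a) by (apply Rmult_lt_0_compat; lra). lra.
Qed.

Theorem mainTheorem7 (E : Type) (v : nat) (rho : E -> E -> R) (S : E -> E) (lambda : R) :
  (1 <= v)%nat ->
  inhabited E ->
  partial_v_gen_metric v rho ->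
  pv_complete rho ->
  0 <= lambda < 1 ->
  (forall u w, rho (S u) (S w) <= lambda * Rmax (rho u w) (Rmax (rho u (S u)) (rho w (S w)))) ->
  exists b : E, S b = b /\ rho b b = 0 /\ (forall c : E, S c = c -> c = b).
Proof.
  intros Hv [x0] Hm Hc Hl Hs.
  pose proof (tri v rho Hv Hm) as T.
  destruct Hm as (P0 & P1 & P2 & P3 & _).
  assert (Hfix0 : forall c, S c = c -> rho c c = 0).
  { intros c Hc'. pose proof (Hs c c) as H. rewrite Hc' in H.
    rewrite (Rmax_left (rho c c) (rho c c)), Rmax_left in H by lra. pose proof (P0 c c). apply (zero_of _ lambda); lra. }
  assert (Huniq : forall b c, S b = b -> S c = c -> c = b).
  { intros b c Hb Hc'. pose proof (Hfix0 b Hb) as Eb. pose proof (Hfix0 c Hc') as Ec.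
    pose proof (Hs c b) as Hq. rewrite Hb, Hc' in Hq.
    rewrite Eb, Ec in Hq. rewrite (Rmax_left 0 0) in Hq by lra.
    rewrite Rmax_left in Hq by apply P0. pose proof (P0 c b).
    assert (Ecb : rho c b = 0) by (apply (zero_of _ lambda); lra).
    apply P1. split; lra. }
  set (x := fun n => Nat.iter n S x0).
  assert (Hx : forall n, x (Datatypes.S n) = S (x n)) by reflexivity.
  set (d0 := rho (x 0%nat) (x 1%nat)).
  assert (Hd0 : 0 <= d0) by apply P0.
  assert (Hd : forall n, rho (x n) (x (Datatypes.S n)) <= lambda ^ n * d0).
  { induction n as [|n IH].
    - rewrite pow_O. unfold d0. lra.
    - pose proof (Hs (x n) (x (Datatypes.S n))) as H.
      change (S (x n)) with (x (Datatypes.S n)) in H.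
      change (S (x (Datatypes.S n))) with (x (Datatypes.S (Datatypes.S n))) in H.
      set (a := rho (x n) (x (Datatypes.S n))) in *.
      set (b := rho (x (Datatypes.S n)) (x (Datatypes.S (Datatypes.S n)))) in *.
      assert (0 <= a) by apply P0. assert (0 <= b) by apply P0.
      assert (b <= lambda * a).
      { destruct (Rle_dec b a).
        - assert (Rmax a (Rmax a b) <= a) by (repeat apply Rmax_lub; lra). nra.
        - assert (Rmax a (Rmax a b) <= b) by (repeat apply Rmax_lub; lra). nra. }
      simpl. nra. }
  set (B := fun n => d0 * lambda ^ n / (1 - lambda)).
  assert (Hpow : forall n, 0 <= lambda ^ n) by (intro; apply pow_le; lra).
  assert (HB : forall n k, rho (x n) (x (n + Datatypes.S k)%nat) <= B n - B (n + Datatypes.S k)%nat).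
  { intros n k. unfold B. induction k as [|k IH].
    - rewrite Nat.add_1_r. pose proof (Hd n).
      assert (E0 : d0 * lambda ^ n / (1 - lambda) - d0 * lambda ^ Datatypes.S n / (1 - lambda)
                 = lambda ^ n * d0) by (simpl; field; lra).
      rewrite E0. lra.
    - pose proof (T (x n) (x (n + Datatypes.S k)%nat) (x (n + Datatypes.S (Datatypes.S k))%nat)).
      pose proof (P0 (x (n + Datatypes.S k)%nat) (x (n + Datatypes.S k)%nat)).
      pose proof (Hd (n + Datatypes.S k)%nat).
      replace (n + Datatypes.S (Datatypes.S k))%nat with (Datatypes.S (n + Datatypes.S k)) in * by lia.
      assert (E1 : d0 * lambda ^ Datatypes.S (n + Datatypes.S k) / (1 - lambda)
                = d0 * lambda ^ (n + Datatypes.S k) / (1 - lambda) - lambda ^ (n + Datatypes.S k) * d0).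
      { simpl. field. lra. }
      rewrite E1. lra. }
  assert (HBpos : forall n, 0 <= B n).
  { intro n. unfold B. apply Rmult_le_pos; [apply Rmult_le_pos; auto|].
    apply Rlt_le, Rinv_0_lt_compat. lra. }
  assert (Hnm : forall n m, (n <= m)%nat -> rho (x n) (x m) <= B n).
  { intros n m Hnm. destruct (Nat.eq_dec n m) as [->|Hne].
    - pose proof (P2 (x m) (x (Datatypes.S m))). pose proof (Hd m).
      unfold B. apply (Rmult_le_reg_r (1 - lambda)); [lra|].
      unfold Rdiv. rewrite !Rmult_assoc, Rinv_l by lra.
      pose proof (Hpow m). pose proof (P0 (x m) (x m)).
      assert (0 <= rho (x m) (x m) * lambda) by (apply Rmult_le_pos; lra). nra.
    - replace m with (n + Datatypes.S (m - n - 1))%nat by lia.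
      pose proof (HB n (m - n - 1)%nat). pose proof (HBpos (n + Datatypes.S (m - n - 1))%nat). lra. }
  assert (HBlim : forall eps, eps > 0 -> exists N, forall n, (N <= n)%nat -> B n < eps).
  { intros eps He.
    destruct (pow_lt_1_zero lambda ltac:(rewrite Rabs_right; lra) (eps * (1 - lambda) / (d0 + 1)))
      as [N HN].
    { apply Rmult_lt_0_compat; [nra|]. apply Rinv_0_lt_compat. lra. }
    exists N. intros n Hn. specialize (HN n Hn). rewrite Rabs_right in HN by (apply Rle_ge; auto).
    unfold B. apply (Rmult_lt_reg_r (1 - lambda)); [lra|].
    unfold Rdiv. rewrite !Rmult_assoc, Rinv_l by lra. rewrite Rmult_1_r.
    unfold Rdiv in HN. apply (Rmult_lt_compat_r (d0 + 1)) in HN; [|lra].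
    rewrite Rmult_assoc, Rinv_l in HN by lra. pose proof (Hpow n). nra. }
  assert (Hcl : dseq_lim (fun n m => rho (x n) (x m)) 0).
  { intros eps He. destruct (HBlim eps He) as [N HN]. exists N. intros n m Hn Hm.
    rewrite Rminus_0_r. rewrite Rabs_right by (apply Rle_ge; apply P0).
    destruct (Nat.le_ge_cases n m).
    - pose proof (Hnm n m H). pose proof (HN n Hn). lra.
    - rewrite P3. pose proof (Hnm m n H). pose proof (HN m Hm). lra. }
  destruct (Hc x (ex_intro _ 0 Hcl)) as [b [Hb1 Hb2]].
  assert (Hbb : rho b b = 0).
  { destruct (Req_dec (rho b b) 0) as [|Hne]; [auto|exfalso].
    set (e := Rabs (rho b b) / 2).
    assert (e > 0) by (unfold e; pose proof (Rabs_pos_lt _ Hne); lra).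
    destruct (Hcl e H) as [N1 H1]. destruct (Hb1 e H) as [N2 H2].
    specialize (H1 (N1 + N2)%nat (N1 + N2)%nat ltac:(lia) ltac:(lia)).
    specialize (H2 (N1 + N2)%nat (N1 + N2)%nat ltac:(lia) ltac:(lia)).
    simpl in H1, H2. unfold e in *.
    revert H1 H2. unfold Rabs. repeat destruct Rcase_abs; lra. }
  rewrite Hbb in Hb2.
  assert (Hfb : S b = b).
  {
  set (t := rho b (S b)).
  assert (Ht0 : 0 <= t) by apply P0.
  assert (Ht : t <= 0).
  { destruct (Rle_dec t 0) as [|Hlt]; [auto|exfalso]. apply Rnot_le_lt in Hlt.
    set (e := (1 - lambda) * t / 2).
    assert (He : e > 0) by (unfold e; nra).
    destruct (Hb2 e He) as [N1 H1]. destruct (Hcl e He) as [N2 H2].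
    set (n := (N1 + N2)%nat).
    pose proof (H1 n ltac:(unfold n; lia)) as A1.
    pose proof (H1 (Datatypes.S n) ltac:(unfold n; lia)) as A2.
    pose proof (H2 n (Datatypes.S n) ltac:(unfold n; lia) ltac:(unfold n; lia)) as A3.
    cbv beta in A1, A2, A3. rewrite Rminus_0_r in A1, A2, A3.
    rewrite Rabs_right in A1, A2, A3 by (apply Rle_ge, P0).
    pose proof (T b (x (Datatypes.S n)) (S b)) as T1.
    pose proof (P0 (x (Datatypes.S n)) (x (Datatypes.S n))).
    pose proof (Hs (x n) b) as Hs1. rewrite <- Hx in Hs1.
    assert (HM : Rmax (rho (x n) b) (Rmax (rho (x n) (x (Datatypes.S n))) t) <= t).
    { assert (0 <= lambda * t) by (apply Rmult_le_pos; lra). assert (Ee : e = t / 2 - lambda * t / 2) by (unfold e; field). assert (e <= t) by lra. repeat apply Rmax_lub; lra. }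
    rewrite (P3 b (x (Datatypes.S n))) in T1.
    fold t in Hs1.
    assert (rho (x (Datatypes.S n)) (S b) <= lambda * t).
    { eapply Rle_trans; [exact Hs1|]. apply Rmult_le_compat_l; [lra|exact HM]. }
    assert (Ee : e = t / 2 - lambda * t / 2) by (unfold e; field).
    assert (0 < (1 - lambda) * t) by (apply Rmult_lt_0_compat; lra).
    assert ((1 - lambda) * t = t - lambda * t) by ring.
    fold t in T1. lra. }
  assert (t = 0) by lra.
  symmetry. apply P1. split.
  - fold t. lra.
  - fold t. pose proof (P2 (S b) b) as Q1. rewrite (P3 (S b) b) in Q1. fold t in Q1.
    pose proof (P0 (S b) (S b)). lra. }
  exists b. split; [exact Hfb|split; [exact Hbb|intros c Hc'; apply Huniq; auto]].
Qed.
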